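(* Assume $N>1$. Then the operator $L$ satisfies the trace condition: for any $\zeta$ in the domain of $L^*$ such that the eigenvalues of the symmetric matrix $-L^*\zeta(x)$ are bounded above by a constant $k$ for a.e. $x\in\Omega$, the eigenvalues of $L^*\zeta(x)$ are bounded above for a.e. $x\in\Omega$ by a constant depending only on $k$ (and not on $\zeta$ or $x$).
   Context: Fix integers $N\ge1$, $p\ge1$, $n=pN^2$, $\Omega=\mathbb T^{N\times p}$ with coordinates $x_{jl}$. Indices of $\mathbb R^n$ are triples $(i,j,k)$, $i,j\in\{1,\dots,N\}$, $k\in\{1,\dots,p\}$; elements of the space $\mathbb R^{n\times n}_s$ of symmetric matrices are arrays $A_{ijk,hqr}$, with Frobenius inner product. The linear map $\mathfrak U:\mathbb R^{n\times n}_s\to\mathbb R^N$ is $(\mathfrak U A)_i=\frac12\sum_{l=1}^p\big[A_{iil,iil}+\sum_{j\ne i}(A_{jjl,ijl}+A_{ijl,jjl})\big]$, with adjoint $\mathfrak U^*:\mathbb R^N\to\mathbb R^{n\times n}_s$. For $w:\Omega\to\mathbb R^{n\times n}_s$, $Lw=-\nabla(\mathfrak U w)$ ($\mathbb R^n$-valued with components $-\partial_{x_{jk}}(\mathfrak Uw)_i$), and $L^*=\mathfrak U^*\operatorname{div}$ is its $L^2(\Omega)$-adjoint, acting on $\mathbb R^n$-valued functions $\zeta$. *)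

(* Defs.v *)
From HB Require Import structures.
From mathcomp Require Import all_boot all_order all_algebra.
From mathcomp Require Import all_classical all_reals.
From mathcomp Require Import topology normedtype.
Set Implicit Arguments. Unset Strict Implicit. Unset Printing Implicit Defensive.
Import Order.TTheory GRing.Theory Num.Theory.
Local Open Scope classical_set_scope.
Local Open Scope ring_scope.

Section Defs.
Variables (R : realType) (N p : nat).

Definition idx := ('I_N * 'I_N * 'I_p)%type.
Definition dimn := #|{: idx}|.

Definition ent (A : 'M[R]_dimn) (a b : idx) : R := A (enum_rank a) (enum_rank b).

Definition Umap (A : 'M[R]_dimn) : 'rV[R]_N :=
  \row_i (2^-1 * \sum_(l < p) (ent A (i, i, l) (i, i, l) +
     \sum_(j < N | j != i) (ent A (j, j, l) (i, j, l) + ent A (i, j, l) (j, j, l)))).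

Definition dotN (u v : 'rV[R]_N) : R := \sum_(i < N) u 0 i * v 0 i.

Definition Esym (a b : 'I_dimn) : 'M[R]_dimn := 2^-1 *: (delta_mx a b + delta_mx b a).

(* Adjoint of Umap w.r.t. the Frobenius inner product on symmetric matrices:
   for symmetric A, <U A, v> = sum_{a,b} A_ab (Ustar v)_ab, and Ustar v is symmetric. *)
Definition Ustar (v : 'rV[R]_N) : 'M[R]_dimn :=
  \matrix_(a, b) dotN (Umap (Esym a b)) v.

(* Points of Omega = T^{N x p} are represented by points x of R^{N x p}
   (coordinates x j l); functions on Omega are functions on R^{N x p}
   considered on the fundamental cell [0,1)^{N x p}. *)
Definition box_vol (a b : 'M[R]_(N, p)) : R :=
  \prod_(j < N) \prod_(l < p) Num.max 0 (b j l - a j l).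
Definition box (a b : 'M[R]_(N, p)) : set 'M[R]_(N, p) :=
  [set x | forall j l, a j l <= x j l <= b j l].

Definition lebesgue_null (E : set 'M[R]_(N, p)) : Prop :=
  forall eps : R, 0 < eps -> exists a b : nat -> 'M[R]_(N, p),
    E `<=` \bigcup_k box (a k) (b k) /\
    forall K : nat, \sum_(k < K) box_vol (a k) (b k) <= eps.

Definition ae_Omega (P : 'M[R]_(N, p) -> Prop) : Prop :=
  lebesgue_null [set x : 'M[R]_(N, p) | (forall j l, 0 <= x j l < 1) /\ ~ P x].

(* L^* zeta = Ustar (div zeta); here applied to the R^N-valued divergence g. *)
Definition Lstar_of_div (g : 'M[R]_(N, p) -> 'rV[R]_N) (x : 'M[R]_(N, p)) : 'M[R]_dimn :=
  Ustar (g x).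

Definition eig_le (A : 'M[R]_dimn) (c : R) : Prop :=
  forall a : R, eigenvalue A a -> a <= c.

End Defs.

(* Main.v *)
Require Import Defs.
From HB Require Import structures.
From mathcomp Require Import all_boot all_order all_algebra.
From mathcomp Require Import all_classical all_reals.
From mathcomp Require Import topology normedtype.
From mathcomp Require Import ring lra.
Import Order.TTheory GRing.Theory Num.Theory.
Local Open Scope ring_scope.
Section S.
Variables (R : realType) (N p : nat).
Local Notation n := (dimn N p).
Local Notation E := (@Esym R N p).

Lemma ent_sum (F : 'I_n -> 'M[R]_n) (c : 'I_n -> R) a b :
  ent (\sum_i c i *: F i) a b = \sum_i c i * ent (F i) a b.
Proof. by rewrite /ent summxE; apply: eq_bigr => i _; rewrite mxE. Qed.
Lemma Umap_sum (F : 'I_n -> 'M[R]_n) (c : 'I_n -> R) :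
  Umap (\sum_i c i *: F i) = \sum_i c i *: Umap (F i).
Proof.
apply/rowP => i; rewrite summxE !mxE.
under [RHS]eq_bigr => a _ do rewrite !mxE mulrCA.
rewrite -mulr_sumr; congr (_ * _).
under [RHS]eq_bigr => a _ do rewrite mulr_sumr.
rewrite [RHS]exchange_big; apply: eq_bigr => l _.
have -> : \sum_(j < N | j != i)
    (ent (\sum_i0 c i0 *: F i0) (j, j, l) (i, j, l) + ent (\sum_i0 c i0 *: F i0) (i, j, l) (j, j, l))
  = \sum_a c a * \sum_(j < N | j != i) (ent (F a) (j, j, l) (i, j, l) + ent (F a) (i, j, l) (j, j, l)).
  under eq_bigr => j _ do rewrite !ent_sum -big_split.
  rewrite exchange_big; apply: eq_bigr => a _; rewrite mulr_sumr.
  by apply: eq_bigr => j _; rewrite mulrDr.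
rewrite ent_sum -big_split; apply: eq_bigr => a _; by rewrite mulrDr.
Qed.
Lemma sum_pick1 (T : finType) (f : T -> R) (c : T) (P : bool) :
  \sum_a f a * ((c == a) && P)%:R = f c * P%:R.
Proof.
rewrite (bigD1 c) //= eqxx big1 ?addr0 // => a; rewrite eq_sym => /negbTE ->.
by rewrite mulr0.
Qed.
Lemma Q_entry (x : 'rV[R]_n) (b c d : 'I_n) :
  (\sum_a x 0 a *: E a b) c d = 2^-1 * (x 0 c * (d == b)%:R + x 0 d * (c == b)%:R).
Proof.
rewrite summxE.
under eq_bigr => a _ do rewrite !mxE mulrCA mulrDr.
rewrite -mulr_sumr big_split /= sum_pick1.
by under eq_bigr do rewrite andbC; rewrite sum_pick1.
Qed.

Local Notation r := (@enum_rank (idx N p)).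
Lemma xMQ (x : 'rV[R]_n) (v : 'rV[R]_N) b :
  (x *m Ustar p v) 0 b = dotN (Umap (\sum_a x 0 a *: E a b)) v.
Proof.
rewrite Umap_sum /dotN mxE.
under eq_bigr => a _ do rewrite mxE /dotN mulr_sumr.
rewrite exchange_big; apply: eq_bigr => i _.
rewrite summxE mulr_suml; apply: eq_bigr => a _.
by rewrite !mxE !mulrA.
Qed.

Lemma xM_raw (x : 'rV[R]_n) (v : 'rV[R]_N) (be : idx N p) :
  let X := fun g => x 0 (r g) in
  (x *m Ustar p v) 0 (r be) = 2^-1 * \sum_i v 0 i * \sum_(l < p)
    (X (i,i,l) * ((i,i,l) == be)%:R + \sum_(j < N | j != i)
       (X (j,j,l) * ((i,j,l) == be)%:R + X (i,j,l) * ((j,j,l) == be)%:R)).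
Proof.
move=> X; rewrite xMQ /dotN mulr_sumr; apply: eq_bigr => i _.
rewrite mxE -mulrA; congr (_ * _); rewrite mulrC; congr (_ * _).
apply: eq_bigr => l _; rewrite /ent !Q_entry !(inj_eq enum_rank_inj).
rewrite /X; congr (_ + _); first by field.
apply: eq_bigr => j _; rewrite !Q_entry !(inj_eq enum_rank_inj); by field.
Qed.

Lemma ind3 (i j i' j' : 'I_N) (l l' : 'I_p) :
  ((((i,j,l) : idx N p) == (i',j',l'))%:R : R) = ((i==i')%:R * (j==j')%:R * (l==l')%:R).
Proof. by rewrite !xpair_eqE; case: (i == i'); case: (j == j'); case: (l == l'); rewrite ?mulr1 ?mulr0 ?mul0r. Qed.

Lemma b0 : ((false%:R) : R) = 0. Proof. by []. Qed.
Lemma b1 : ((true%:R) : R) = 1. Proof. by []. Qed.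

Lemma coll (T : finType) (P : pred T) (F : T -> R) (c : T) :
  \sum_(a | P a) F a * (a == c)%:R = if P c then F c else 0.
Proof.
case: ifP => Pc.
  rewrite (bigD1 c) //= eqxx mulr1 big1 ?addr0 // => a /andP[_ /negbTE ->].
  by rewrite mulr0.
by rewrite big1 // => a Pa; case: eqP => [E'|]; [rewrite E' Pc in Pa | rewrite mulr0].
Qed.

Lemma coll' (T : finType) (P : pred T) (F : T -> R) (c : T) :
  \sum_(a | P a) F a * (c == a)%:R = if P c then F c else 0.
Proof. by under eq_bigr do rewrite eq_sym; rewrite coll. Qed.

Lemma xM_entry (x : 'rV[R]_n) (v : 'rV[R]_N) i0 j0 l0 :
  let X := fun g => x 0 (r g) in
  (x *m Ustar p v) 0 (r (i0,j0,l0)) = 2^-1 * (if i0 == j0 then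
     v 0 j0 * X (j0,j0,l0) + \sum_(i < N | i != j0) v 0 i * X (i,j0,l0)
     else v 0 i0 * X (j0,j0,l0)).
Proof.
move=> X; rewrite xM_raw; congr (2^-1 * _).
under eq_bigr => i _ do under eq_bigr => l _ do
  (under eq_bigr => j _ do rewrite !ind3 !mulrA -mulrDl;
   rewrite !ind3 !mulrA -mulr_suml -mulrDl).
under eq_bigr => i _ do rewrite coll /=.
rewrite /X; case: (eqVneq i0 j0) => [<-|Hne].
  rewrite (bigD1 i0) //= eqxx; congr (_ + _).
    rewrite big1 ?addr0 ?mulr1 // => j /negbTE ->.
    by rewrite !mulr0 add0r.
  apply: eq_bigr => i Hi; rewrite (negbTE Hi) !mulr0 add0r; congr (_ * _).
  rewrite (bigD1 i0) /=; last by rewrite eq_sym.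
  rewrite eqxx !mulr1 mulr0 add0r big1 ?addr0 // => j /andP[_ /negbTE ->].
  by rewrite !mulr0 addr0.
rewrite (bigD1 i0) //= eqxx [X in _ + X]big1 ?addr0; last first.
  move=> i /negbTE Hi; rewrite Hi b0 mulr0 mul0r add0r big1 ?mulr0 // => j _.
  rewrite mulr0 mul0r add0r; case: (eqVneq j i0) => [->|_]; last by rewrite !mulr0 mul0r.
  by rewrite (negbTE Hne) mulr0.
rewrite (negbTE Hne) !b1 mulr0 add0r; congr (_ * _).
rewrite (bigD1 j0) /=; last by rewrite eq_sym.
rewrite eqxx (eq_sym j0) (negbTE Hne) !mulr1 mulr0 addr0 big1 ?addr0 // => j /andP[Hj1 /negbTE ->].
by rewrite (negbTE Hj1) !mulr0 addr0.
Qed.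
Lemma eig_vec (v : 'rV[R]_N) (jf : 'I_N) (lf : 'I_p) (lam : R) :
  lam ^+ 2 = v 0 jf / 2 * lam + (\sum_(i < N | i != jf) v 0 i * (v 0 i / 2)) / 2 ->
  let X := fun g : idx N p => if (g.1.2 == jf) && (g.2 == lf) then
     (if g.1.1 == jf then lam else v 0 g.1.1 / 2) else 0 in
  let x := \row_b X (enum_val b) : 'rV[R]_n in
  x *m Ustar p v = lam *: x.
Proof.
move=> H X x.
have xE : forall g, x 0 (r g) = X g by move=> g; rewrite mxE enum_rankK.
apply/rowP => b; rewrite -(enum_valK b); case: (enum_val b) => [[i0 j0] l0].
rewrite xM_entry; under eq_bigr do rewrite xE; rewrite !xE [RHS]mxE xE /X /=.
case Hc: ((j0 == jf) && (l0 == lf)); last first.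
  rewrite big1 ?mulr0 ?addr0; first by case: ifP; rewrite ?mulr0 ?addr0.
  by move=> i _; rewrite mulr0.
move/andP: Hc => [/eqP Ej _]; subst j0; rewrite eqxx.
case: (eqVneq i0 jf) => [Ei|Hi]; last by field.
subst i0. under eq_bigr => i Hi do rewrite (negbTE Hi).
by rewrite -expr2 H; field.
Qed.
Lemma v_key (v : 'rV[R]_N) (k : R) (Hp : (0 < p)%N) jf i :
  (forall a, eigenvalue (- Ustar p v) a -> a <= k) -> i != jf ->
  v 0 i ^+ 2 <= 4 * Num.max k 0 ^+ 2 + 2 * Num.max k 0 * v 0 jf.
Proof.
move=> Heig Hij.
set K := Num.max k 0.
have K0 : 0 <= K by rewrite le_max lexx orbT.
have kK : k <= K by rewrite le_max lexx.
set S := \sum_(i < N | i != jf) v 0 i * (v 0 i / 2).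
have S0 : 0 <= S.
  by apply: sumr_ge0 => j _; rewrite mulrA -expr2 divr_ge0 ?sqr_ge0.
have Si : v 0 i * (v 0 i / 2) <= S.
  rewrite /S (bigD1 i) //= lerDl; apply: sumr_ge0 => j _.
  by rewrite mulrA -expr2 divr_ge0 ?sqr_ge0.
set a := v 0 jf / 2.
have hpos : 0 <= a ^+ 2 + 2 * S by rewrite addr_ge0 ?sqr_ge0 ?mulr_ge0.
set s := Num.sqrt (a ^+ 2 + 2 * S).
have hs : s ^+ 2 = a ^+ 2 + 2 * S by rewrite sqr_sqrtr.
have s0 : 0 <= s by rewrite sqrtr_ge0.
set lam := (a - s) / 2.
have H : lam ^+ 2 = v 0 jf / 2 * lam + S / 2.
  have -> : lam ^+ 2 = (a ^+ 2 - 2 * a * s + s ^+ 2) / 4 by rewrite /lam; field.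
  by rewrite hs /lam /a; field.
have hlam : - lam <= K.
  pose lf : 'I_p := Ordinal Hp.
  have E := @eig_vec v jf lf lam H.
  move: E => /=; set x := (\row_b _ : 'rV[R]_n) => E.
  case: (eqVneq x 0) => [x0|xn0].
    have : x 0 (r (jf, jf, lf)) = 0 by rewrite x0 mxE.
    rewrite mxE enum_rankK /= !eqxx /= => ->; by rewrite oppr0.
  apply: le_trans kK; apply: Heig; apply/eigenvalueP; exists x => //.
  by rewrite mulmxN E scaleNr.
have sa : - a <= s by nra.
have lp : 0 <= K + (a - lam) by rewrite /lam; nra.
have P : 0 <= (K + lam) * (K + (a - lam)) by apply: mulr_ge0; lra.
have e1 : v 0 i ^+ 2 <= 2 * S by rewrite expr2; lra.
have e2 : v 0 jf = 2 * a by rewrite /a; field.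
rewrite e2; nra.
Qed.
Lemma v_bound (v : 'rV[R]_N) (k : R) (HN : (1 < N)%N) (Hp : (0 < p)%N) :
  (forall a, eigenvalue (- Ustar p v) a -> a <= k) ->
  forall i, `|v 0 i| <= 5 * Num.max k 0.
Proof.
move=> Heig i.
have K0 : 0 <= Num.max k 0 by rewrite le_max lexx orbT.
pose j : 'I_N := if val i == 0%N then Ordinal HN else Ordinal (ltn_trans (ltnSn 0) HN).
have Hij : i != j.
  rewrite /j; case: ifP => /eqP Hi; apply/eqP => E; move: Hi; rewrite E //=.
have h1 := @v_key v k Hp j i Heig Hij.
have h2 := @v_key v k Hp i j Heig (negbT (introF eqP (fun E => (elimN eqP Hij) (esym E)))).
move: h1 h2; set K := Num.max k 0; set x := v 0 i; set y := v 0 j => h1 h2.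
have h3 : (x - K) ^+ 2 <= (4 * K) ^+ 2.
  have : 0 <= (y - K) ^+ 2 by apply: sqr_ge0.
  rewrite !expr2 in h1 h2 *; nra.
have h4 : `|x - K| <= 4 * K.
  by rewrite -(@ler_pXn2r _ 2) ?nnegrE ?normr_ge0 ?mulr_ge0 // real_normK ?num_real.
move: h4; rewrite ler_norml => /andP[h5 h6].
rewrite ler_norml; apply/andP; split; lra.
Qed.
Lemma eig_upper (v : 'rV[R]_N) (V : R) a :
  (forall i, `|v 0 i| <= V) -> eigenvalue (Ustar p v) a ->
  a <= V * \sum_(b < n) \sum_(c < n) \sum_(i < N) `|Umap (E b c) 0 i|.
Proof.
move=> Hv /eigenvalueP [w Hw wn0].
have [b0 hb0] : exists b, w 0 b != 0.
  case: (pickP (fun b => w 0 b != 0)) => [b Hb|H0]; first by exists b.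
  exfalso; move: wn0; apply/negP; rewrite negbK; apply/eqP/rowP => b.
  by rewrite mxE; move: (H0 b) => /negbFE /eqP.
case: (@arg_maxP _ R _ b0 xpredT (fun b => `|w 0 b|) isT) => m _ Hm.
have wm : 0 < `|w 0 m|.
  by apply: lt_le_trans (Hm b0 isT); rewrite normr_gt0.
have hM : forall b c, `|Ustar p v b c| <= V * \sum_i `|Umap (E b c) 0 i|.
  move=> b c; rewrite mxE /dotN mulr_sumr; apply: le_trans (ler_norm_sum _ _ _) _.
  apply: ler_sum => i _; rewrite normrM [`|Umap _ _ _| * _]mulrC; by apply: ler_wpM2r.
have ha : `|a| <= \sum_b `|Ustar p v b m|.
  have e : a * w 0 m = \sum_b w 0 b * Ustar p v b m.
    by move/rowP: Hw => /(_ m); rewrite !mxE => <-.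
  have : `|a| * `|w 0 m| <= `|w 0 m| * \sum_b `|Ustar p v b m|.
    rewrite -normrM e mulr_sumr; apply: le_trans (ler_norm_sum _ _ _) _.
    apply: ler_sum => b _; rewrite normrM; apply: ler_wpM2r => //.
    exact: Hm.
  by rewrite mulrC ler_pM2l.
apply: le_trans (ler_norm a) _; apply: le_trans ha _.
rewrite mulr_sumr; apply: ler_sum => b _.
apply: le_trans (_ : \sum_c `|Ustar p v b c| <= _).
  by rewrite (bigD1 m) //= lerDl sumr_ge0.
rewrite mulr_sumr; apply: ler_sum => c _; exact: hM.
Qed.
End S.

Theorem lemma2p10 (R : realType) (N p : nat) (HN : (1 < N)%N) (Hp : (0 < p)%N)
  (k : R) :
  exists C : R, forall g : 'M[R]_(N, p) -> 'rV[R]_N,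
    ae_Omega (fun x => eig_le (- Lstar_of_div g x) k) ->
    ae_Omega (fun x => eig_le (Lstar_of_div g x) C).
Proof.
exists (5 * Num.max k 0 * \sum_(b < dimn N p) \sum_(c < dimn N p) \sum_(i < N)
   `|Umap (@Esym R N p b c) 0 i|).
move=> g H eps he.
have [a [b [Hs Hsum]]] := H eps he.
exists a, b; split => // x [Hx HnP]; apply: Hs; split => // Hk; apply: HnP.
move=> c Hc; apply: (@eig_upper R N p (g x) (5 * Num.max k 0) c _ Hc).
exact: (@v_bound R N p (g x) k HN Hp Hk).
Qed.
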